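(* Let $q$ be a prime power and $N,m,k,r$ positive integers with $m\le N$, $k\le m$, $r<k$. Let $\mathcal{C}\subseteq\mathbb{F}_{q^N}^m$ be an $[N\times m,\,Nk,\,m-k+1]$ Gabidulin MRD code, and assume either (Case 1) $m\equiv 0\pmod r$, or (Case 2) $m\equiv k\equiv j\pmod r$ for some $1\le j<r$. Partition the $m$ coordinates into $\lfloor m/r\rfloor$ disjoint groups $G_i$ of size $r$, together with (in Case 2 only) one additional group $\widehat{G}$ of size $j$. Define $C^{\mathrm{loc}}$ as the set of vectors obtained from each $\mathbf{c}\in\mathcal{C}$ by appending, for each group $G_i$, a parity symbol $p_i=\sum_{s\in G_i}c_s$, and (in Case 2) a parity symbol $\widehat{p}=\sum_{s\in\widehat{G}}c_s$. Let $n$ be the length of $C^{\mathrm{loc}}$ (so $n=m+m/r$ in Case 1 and $n=m+\lceil m/r\rceil$ in Case 2). Then $C^{\mathrm{loc}}$ is an $[n,k,d_{\min}]$ code over $\mathbb{F}_{q^N}$ with minimum Hamming distance $d_{\min}=n-k+2-\lceil k/r\rceil$.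
   Context: The Gabidulin code $\mathcal{C}$ with these parameters consists of the vectors $[f(g_1),\dots,f(g_m)]$, where $g_1,\dots,g_m\in\mathbb{F}_{q^N}$ are fixed and linearly independent over $\mathbb{F}_q$, and $f$ ranges over linearized polynomials $f(x)=\sum_{i=0}^{k-1}a_ix^{q^i}$ with $a_i\in\mathbb{F}_{q^N}$; its minimum rank distance is $m-k+1$. The code $C^{\mathrm{loc}}$ is regarded as a linear code over $\mathbb{F}_{q^N}$ with the Hamming metric. *)

(* Defs.v *)
From HB Require Import structures.
From mathcomp Require Import all_boot all_order all_algebra all_field.
Set Implicit Arguments. Unset Strict Implicit. Unset Printing Implicit Defensive.
Import GRing.Theory.
Local Open Scope ring_scope.

Definition ceil_div (a b : nat) : nat := ((a + b.-1) %/ b)%N.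

Definition hwt (L : fieldType) (n : nat) (v : 'rV[L]_n) : nat :=
  #|[set i : 'I_n | v ord0 i != 0]|.

(* Codeword of the Gabidulin code: evaluation of the linearized polynomial
   f(x) = sum_{i<k} a_i x^{q^i} at the points g_1, ..., g_m. *)
Definition gab_word (L : fieldType) (q m k : nat) (g : 'I_m -> L)
  (a : 'I_k -> L) : 'rV[L]_m :=
  \row_(j < m) \sum_(i < k) a i * g j ^+ (q ^ i).

Definition gabidulin_code (L : fieldType) (q m k : nat) (g : 'I_m -> L)
  (c : 'rV[L]_m) : Prop := exists a : 'I_k -> L, c = @gab_word L q m k g a.

(* Append to c one parity symbol per group; grp assigns each coordinate
   to its group (groups indexed by 'I_t). *)
Definition loc_extend (L : fieldType) (m t : nat) (grp : 'I_m -> 'I_t)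
  (c : 'rV[L]_m) : 'rV[L]_(m + t) :=
  row_mx c (\row_(i < t) \sum_(s < m | grp s == i) c ord0 s).

Definition loc_code (L : fieldType) (q m k t : nat) (g : 'I_m -> L)
  (grp : 'I_m -> 'I_t) (v : 'rV[L]_(m + t)) : Prop :=
  exists c, @gabidulin_code L q m k g c /\ v = loc_extend grp c.

Definition min_hamming_distance (L : fieldType) (n : nat)
  (C : 'rV[L]_n -> Prop) (d : nat) : Prop :=
  (exists2 c, C c & (c != 0) && (hwt c == d)) /\
  (forall c, C c -> c != 0 -> (d <= hwt c)%N).

(* Main.v *)
From HB Require Import structures.
From mathcomp Require Import all_boot all_order all_algebra all_field all_fingroup all_solvable.
From mathcomp Require Import zify ring.
Require Import Defs.
Set Implicit Arguments. Unset Strict Implicit. Unset Printing Implicit Defensive.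
Import GRing.Theory.
Local Open Scope ring_scope.

Section Gab.
Variables (F : finFieldType) (L : fieldExtType F).
Local Notation q := #|F|.

Lemma q_gt1 : (1 < q)%N. Proof. exact: finNzRing_gt1. Qed.

Lemma pnat_q e : ([pchar L]).-nat (q ^ e)%N.
Proof.
have [p pp pF] := finPcharP F.
have : p.-nat q.
  have := abelem_pgroup (fin_ring_pchar_abelem pF).
  by rewrite /pgroup cardsT.
move=> pq; rewrite pnatX; apply/orP; left.
rewrite (eq_pnat _ (pchar_lalg L)) (eq_pnat _ (pcharf_eq pF)) //.
Qed.

Lemma frobD e (x y : L) : (x + y) ^+ (q ^ e) = x ^+ (q ^ e) + y ^+ (q ^ e).
Proof. exact: exprDn_pchar (pnat_q e). Qed.

Lemma frobZ e (c : F) (x : L) : (c *: x) ^+ (q ^ e) = c *: x ^+ (q ^ e).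
Proof.
rewrite exprZn; congr (_ *: _).
elim: e => [|e IH]; first by rewrite expn0 expr1.
by rewrite expnSr exprM IH expf_card.
Qed.

Definition linp (k : nat) (a : 'I_k -> L) (x : L) : L :=
  \sum_(i < k) a i * x ^+ (q ^ i).

Lemma linpD k (a : 'I_k -> L) x y : linp a (x + y) = linp a x + linp a y.
Proof. by rewrite /linp -big_split /=; apply: eq_bigr => i _; rewrite frobD mulrDr. Qed.

Lemma linpZ k (a : 'I_k -> L) (c : F) x : linp a (c *: x) = c *: linp a x.
Proof.
rewrite /linp scaler_sumr; apply: eq_bigr => i _.
by rewrite frobZ scalerAr.
Qed.

Lemma linp0 k (a : 'I_k -> L) : linp a 0 = 0.
Proof. by have := linpZ a 0 0; rewrite !scale0r. Qed.

Lemma linp_sum k (a : 'I_k -> L) (I : finType) (P : pred I) (c : I -> F) (h : I -> L) :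
  linp a (\sum_(i | P i) c i *: h i) = \sum_(i | P i) c i *: linp a (h i).
Proof.
elim/big_rec2: _ => [|i y1 y2 _ <-]; first exact: linp0.
by rewrite linpD linpZ.
Qed.


Lemma roots_bound k (a : 'I_k -> L) (I : finType) (phi : {ffun I -> F} -> L) :
  injective phi -> (forall c, linp a (phi c) = 0) -> (exists i, a i != 0) ->
  (#|I| < k)%N.
Proof.
move=> injphi hroot [i0 ai0].
have q1 := q_gt1.
pose P : {poly L} := \sum_(i < k) a i *: 'X^(q ^ i).
have hP x : P.[x] = linp a x.
  rewrite /P horner_sum; apply: eq_bigr => i _.
  by rewrite hornerZ hornerXn.
have coefP j : P`_j = \sum_(i < k) a i * (j == (q ^ i)%N)%:R.
  rewrite /P coef_sum; apply: eq_bigr => i _; by rewrite coefZ coefXn.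
have P0 : P != 0.
  apply/eqP => /(congr1 (fun p : {poly L} => p`_(q ^ i0)%N)).
  rewrite coef0 coefP (bigD1 i0) //= eqxx mulr1 big1 ?addr0.
    by move/eqP; rewrite (negPf ai0).
  move=> i ni; rewrite eqn_exp2l // eq_sym.
  by rewrite (inj_eq val_inj) (negPf ni) mulr0.
have sP : (size P <= (q ^ k.-1).+1)%N.
  apply/leq_sizeP => j hj; rewrite coefP big1 // => i _.
  case: eqP => [ej|]; last by rewrite mulr0.
  exfalso; move: hj; rewrite ej ltnNge => /negP; apply.
  rewrite leq_exp2l //; have := ltn_ord i; lia.
pose rs := [seq phi c | c <- enum {ffun I -> F}].
have := @max_poly_roots _ P rs P0.
have -> : all (root P) rs.
  by apply/allP => x /mapP [c _ ->]; rewrite /root hP hroot.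
rewrite map_inj_uniq // ?enum_uniq // size_map -cardE card_ffun => /(_ isT isT) h.
have h2 : (q ^ #|I| <= q ^ k.-1)%N.
  by rewrite -ltnS; exact: (leq_trans h sP).
idtac.
move: h2; rewrite leq_exp2l //; have := ltn_ord i0; lia.
Qed.


Section Code.
Variables (m k t : nat) (g : 'I_m -> L) (grp : 'I_m -> 'I_t).
Hypothesis freeg : free [seq g i | i : 'I_m].

Definition w i := \sum_(s | grp s == i) g s.

Lemma linp_w (a : 'I_k -> L) i : linp a (w i) = \sum_(s | grp s == i) linp a (g s).
Proof.
have := linp_sum a (fun s => grp s == i) (fun _ => 1) g.
rewrite /w; under eq_bigr do rewrite scale1r.
by move->; apply: eq_bigr => s _; rewrite scale1r.
Qed.

Lemma gfree (c : 'I_m -> F) : \sum_(s < m) c s *: g s = 0 -> forall s, c s = 0.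
Proof.
have fX : free [tuple g i | i < m].
  by move: freeg; rewrite /= -val_ord_tuple.
move=> h s; apply: (freeP fX) => //.
rewrite -[RHS]h; apply: eq_bigr => i _.
by rewrite -tnth_nth tnth_mktuple.
Qed.


Definition Zu (a : 'I_k -> L) := [set s | linp a (g s) == 0].
Definition Zp (a : 'I_k -> L) := [set i | linp a (w i) == 0].
Definition FZ (a : 'I_k -> L) := [set i in Zp a | [set s | grp s == i] \subset Zu a].

Lemma lower (a : 'I_k -> L) : (exists i, a i != 0) ->
  (#|Zu a| + #|Zp a :\: FZ a| < k)%N.
Proof.
move=> anz.
set Zu := Zu a. set Zp := Zp a. set FZ := FZ a.
pose NZ := Zp :\: FZ.
pose I := ({s : 'I_m | s \in Zu} + {i : 'I_t | i \in NZ})%type.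
have cardI : #|{: I}| = (#|Zu| + #|NZ|)%N.
  by rewrite card_sum !card_sig.
pose gam (c : {ffun I -> F}) (s : 'I_m) : F :=
  (if insub s is Some x then c (inl x) else 0) +
  (if insub (grp s) is Some y then c (inr y) else 0).
pose phi c := \sum_(s < m) gam c s *: g s.
rewrite -cardI; apply: (@roots_bound k a I phi) => //.
- have gam0 c : (forall s, gam c s = 0) -> forall x, c x = 0.
    move=> h0.
    have hr y : c (inr y) = 0.
      have : val y \in NZ := valP y.
      rewrite inE => /andP [nF iZ].
      have : ~~ ([set s | grp s == val y] \subset Zu).
        by move: nF; rewrite inE iZ.
      case/subsetPn => s; rewrite inE => /eqP hs sZ.
      have := h0 s; rewrite /gam hs valK insubF ?add0r //.
      exact: negbTE.
    case=> [y|y]; last exact: hr.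
    have := h0 (val y); rewrite /gam valK.
    by case: insub => [y'|]; rewrite ?hr addr0.
  move=> c1 c2 e; apply/ffunP => x; apply/eqP; rewrite -subr_eq0.
  have -> : c1 x - c2 x = (c1 - c2) x by rewrite !ffunE.
  apply/eqP; apply: gam0; apply: gfree.
  have -> : \sum_(s < m) gam (c1 - c2) s *: g s = phi c1 - phi c2.
    rewrite /phi -sumrB; apply: eq_bigr => s _; rewrite -scalerBl; congr (_ *: _).
    rewrite /gam; case: insub => [x1|]; case: insub => [x2|]; rewrite ?ffunE; ring.
  by rewrite e subrr.
- move=> c; rewrite /phi linp_sum.
  under eq_bigr do rewrite /gam scalerDl.
  rewrite big_split /= big1 ?add0r.
    rewrite (partition_big grp predT) //= big1 // => i _.
    under eq_bigr => s /eqP hs do rewrite hs.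
    rewrite -scaler_sumr -linp_w.
    case: insubP => [y yN _|_]; last by rewrite scale0r.
    by move: yN; rewrite inE => /andP [_]; rewrite inE => /eqP ->; rewrite scaler0.
  move=> s _; case: insubP => [y sZ _|_]; last by rewrite scale0r.
  by move: sZ; rewrite inE => /eqP ->; rewrite scaler0.
Qed.


Definition enc (a : 'I_k -> L) := loc_extend grp (gab_word q g a).

Lemma enc_l a s : (enc a) ord0 (lshift t s) = linp a (g s).
Proof. by rewrite /enc /loc_extend row_mxEl mxE. Qed.

Lemma enc_r a i : (enc a) ord0 (rshift m i) = linp a (w i).
Proof.
rewrite /enc /loc_extend row_mxEr mxE linp_w; apply: eq_bigr => s _.
by rewrite mxE.
Qed.

Lemma card_pre (A : {set 'I_t}) :
  #|[set s | grp s \in A]| = (\sum_(i in A) #|[set s | grp s == i]|)%N.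
Proof.
rewrite -sum1_card (partition_big grp (mem A)) /=; last by move=> s; rewrite inE.
apply: eq_bigr => i iA; rewrite -sum1_card; apply: eq_bigl => s.
rewrite !inE; apply/andP/idP => [[_ //]|/eqP e]; by rewrite e.
Qed.

Lemma card_true (n : nat) (P : pred 'I_n) : #|[set i | P i]| = (\sum_(i < n) P i)%N.
Proof. by rewrite -sum1_card big_mkcond /=; apply: eq_bigr => i _; rewrite inE; case: (P i). Qed.

Lemma hwt_enc a : hwt (enc a) = ((m - #|Zu a|) + (t - #|Zp a|))%N.
Proof.
rewrite /hwt card_true big_split_ord /=.
have e1 : (\sum_(i < m) (enc a ord0 (lshift t i) != 0%R))%N = (m - #|Zu a|)%N.
  have := cardsC (Zu a); rewrite card_ord => hc.
  suff h : (#|~: Zu a| = \sum_(i < m) (enc a ord0 (lshift t i) != 0%R))%N by lia.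
  rewrite card_true; apply: eq_bigr => s _.
  by rewrite !inE enc_l.
have e2 : (\sum_(i < t) (enc a ord0 (rshift m i) != 0%R))%N = (t - #|Zp a|)%N.
  have := cardsC (Zp a); rewrite card_ord => hc.
  suff h : (#|~: Zp a| = \sum_(i < t) (enc a ord0 (rshift m i) != 0%R))%N by lia.
  rewrite card_true; apply: eq_bigr => s _.
  by rewrite !inE enc_r.
by rewrite e1 e2.
Qed.


Lemma vanish (T : {set 'I_m}) : (#|T| < k)%N ->
  exists a : 'I_k -> L, (exists i, a i != 0) /\ forall s, s \in T -> linp a (g s) = 0.
Proof.
move=> Tk.
pose A : 'M[L]_(k, #|T|) := \matrix_(i, j) g (enum_val j) ^+ (q ^ i).
pose K := kermx A.
have rK : (0 < \rank K)%N.
  by rewrite mxrank_ker; have := rank_leq_col A; lia.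
have [i0 hi0] : exists i, row i K != 0.
  case: (pickP (fun i => row i K != 0)) => [i hi|h]; first by exists i.
  move: rK; suff -> : K = 0 by rewrite mxrank0.
  apply/row_matrixP => i; rewrite row0; apply/eqP; exact: negbFE (h i).
pose u := row i0 K.
have uA : u *m A = 0 by rewrite /u -row_mul mulmx_ker row0.
exists (fun i => u ord0 i); split.
  case: (pickP (fun i => u ord0 i != 0)) => [i hi|h]; first by exists i.
  move: hi0; rewrite -/u; suff -> : u = 0 by rewrite eqxx.
  apply/rowP => j; have := h j; rewrite /= => /negbFE /eqP.
  by move=> H; apply: (etrans H); rewrite mxE.
move=> s sT.
rewrite /linp; transitivity ((u *m A) ord0 (enum_rank_in sT s)); last by rewrite uA mxE.
rewrite mxE; apply: eq_bigr => i _.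
by rewrite [A _ _]mxE (enum_rankK_in sT sT).
Qed.

Definition Mx : 'M[L]_(k, m + t) :=
  row_mx (\matrix_(i, s) g s ^+ (q ^ i)) (\matrix_(i, l) w l ^+ (q ^ i)).

Lemma enc_mx (a : 'I_k -> L) : (\row_i a i) *m Mx = enc a.
Proof.
rewrite mul_mx_row /enc /loc_extend; congr row_mx; apply/rowP => j; rewrite !mxE.
  by apply: eq_bigr => i _; rewrite !mxE.
transitivity (linp a (w j)).
  by rewrite /linp; apply: eq_bigr => i _; rewrite !mxE.
by rewrite linp_w; apply: eq_bigr => s _; rewrite mxE.
Qed.

Lemma enc_row (u : 'rV[L]_k) : u *m Mx = enc (fun i => u ord0 i).
Proof.
rewrite -enc_mx; congr (_ *m _); apply/rowP => j; by rewrite mxE.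
Qed.

Lemma enc0 (a : 'I_k -> L) : (forall i, a i = 0) -> enc a = 0.
Proof.
move=> h; rewrite -enc_mx; suff -> : (\row_i a i) = 0 by rewrite mul0mx.
by apply/rowP => j; rewrite !mxE h.
Qed.

Lemma enc_inj0 (a : 'I_k -> L) : (k <= m)%N -> enc a = 0 -> forall i, a i = 0.
Proof.
move=> km e i; apply/eqP; apply/negP => /negP ai.
have := @lower a (ex_intro _ i ai).
suff -> : Zu a = setT by rewrite cardsT card_ord; lia.
apply/setP => s; rewrite !inE -enc_l e mxE.
by rewrite eqxx.
Qed.

Lemma lower2 (a : 'I_k -> L) : (exists i, a i != 0) ->
  [/\ (#|Zu a| + (#|Zp a| - #|FZ a|) < k)%N, (#|FZ a| <= #|Zp a|)%N &
      (\sum_(i in FZ a) #|[set s | grp s == i]| <= #|Zu a|)%N].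
Proof.
move=> anz.
have FZp : FZ a \subset Zp a by apply/subsetP => i; rewrite inE => /andP [].
split.
- have := lower anz; have := cardsID (FZ a) (Zp a).
  by rewrite (setIidPr FZp); lia.
- exact: subset_leq_card.
- rewrite -card_pre; apply: subset_leq_card; apply/subsetP => s.
  rewrite inE inE => /andP [_ /subsetP]; apply; by rewrite inE.
Qed.

Lemma sum_const_r (A : {set 'I_t}) r :
  (forall i, #|[set s | grp s == i]| = r) ->
  (\sum_(i in A) #|[set s | grp s == i]|)%N = (#|A| * r)%N.
Proof. by move=> h; rewrite -sum_nat_const; apply: eq_bigr => i _; rewrite h. Qed.

Lemma sum_case2 (A : {set 'I_t}) r j i0 :
  (forall i, i != i0 -> #|[set s | grp s == i]| = r) ->
  #|[set s | grp s == i0]| = j -> (j <= r)%N ->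
  (#|A| * r <= \sum_(i in A) #|[set s | grp s == i]| + (r - j))%N.
Proof.
move=> hr h0 jr.
rewrite -sum_nat_const.
apply: (@leq_trans (\sum_(i in A) (#|[set s | grp s == i]| + (if i == i0 then r - j else 0)))%N).
  apply: leq_sum => i _; case: eqP => [->|/eqP ne]; first by rewrite h0; lia.
  by rewrite hr // addn0.
rewrite big_split /= leq_add2l.
case: (boolP (i0 \in A)) => i0A.
  rewrite (bigD1 i0 i0A) /= eqxx big1 ?addn0 // => i /andP [_ /negPf ->] //.
rewrite big1 // => i iA; case: eqP => // e; move: i0A; by rewrite -e iA.
Qed.

End Code.

Lemma ceilE k r : (0 < k)%N -> (0 < r)%N -> ceil_div k r = ((k.-1) %/ r).+1.
Proof.
move=> k0 r0; rewrite /ceil_div.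
have -> : (k + r.-1 = k.-1 + r)%N by lia.
by rewrite divnDr // divnn r0 addn1.
Qed.

Lemma subset_card (T : finType) (A B : {set T}) n : A \subset B -> (#|A| <= n <= #|B|)%N ->
  exists C : {set T}, [/\ A \subset C, C \subset B & #|C| = n].
Proof.
move=> AB; elim: n => [|n IH] /andP [hA hB].
  exists A; split => //; lia.
case: (ltngtP #|A| n.+1) => h; last by exists A.
  have [C [AC CB Cn]] : exists C : {set T}, [/\ A \subset C, C \subset B & #|C| = n].
    by apply: IH; apply/andP; split; lia.
  have : ~~ (B \subset C).
    apply/negP => /subset_leq_card; lia.
  case/subsetPn => x xB xC; exists (x |: C); split.
  - by apply: (subset_trans AC); apply: subsetUr.
  - by rewrite subUset sub1set xB.
  - by rewrite cardsU1 xC Cn.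
lia.
Qed.

End Gab.

Unset Implicit Arguments.
Set Strict Implicit.

Theorem theorem2 (F : finFieldType) (L : fieldExtType F)
  (N m k r t : nat) (g : 'I_m -> L) (grp : 'I_m -> 'I_t) :
  \dim {: L}%VS = N ->
  (0 < N)%N -> (0 < m)%N -> (0 < k)%N -> (0 < r)%N ->
  (m <= N)%N -> (k <= m)%N -> (r < k)%N ->
  free [seq g i | i : 'I_m] ->
  (* Case 1 *)
  ((r %| m)%N /\ t = (m %/ r)%N /\
     (forall i : 'I_t, #|[set s | grp s == i]| = r))
  \/
  (* Case 2 *)
  (exists j : nat, [/\ (0 < j)%N, (j < r)%N, (m %% r = j)%N, (k %% r = j)%N
     & t = (m %/ r).+1] /\
     exists i0 : 'I_t, #|[set s | grp s == i0]| = j /\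
       forall i : 'I_t, i != i0 -> #|[set s | grp s == i]| = r) ->
  let n := (m + t)%N in
  exists V : {vspace 'rV[L]_(m + t)},
    (forall v, v \in V <-> @loc_code L #|F| m k t g grp v) /\
    \dim V = k /\
    min_hamming_distance (@loc_code L #|F| m k t g grp)
      (n - k + 2 - ceil_div k r)%N.
Proof.
move=> dimN N0 m0 k0 r0 mN km rk freeg Hcase n.
have codeP v : @loc_code L #|F| m k t g grp v <-> exists a : 'I_k -> L, v = enc g grp a.
  split; first by case=> c [[a ->] ->]; exists a.
  by case=> a ->; exists (gab_word #|F| g a); split => //; exists a.
pose fM : 'Hom('rV[L]_k, 'rV[L]_(m + t)) := linfun (mulmxr (Mx k g grp)).
exists (fM @: fullv)%VS; split; [|split].
- move=> v; rewrite codeP; split.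
    by case/memv_imgP => u _ ->; rewrite lfunE /= enc_row; eexists.
  case=> a ->; apply/memv_imgP; exists (\row_i a i); first exact: memvf.
  by rewrite lfunE /= enc_mx.
- rewrite limg_dim_eq ?dimvf ?dim_matrix ?mul1r //.
  rewrite capfv; apply/eqP/lker0P => u1 u2; rewrite !lfunE /= => e.
  apply/eqP; rewrite -subr_eq0; apply/eqP/rowP => j.
  have : enc g grp (fun i => (u1 - u2) ord0 i) = 0.
    by rewrite -enc_row mulmxBl e subrr.
  move/(enc_inj0 freeg km) => h; by rewrite h mxE.
rewrite ceilE //.
set b := (k.-1 %/ r)%N.
have fb : forall a : 'I_k -> L, (exists i, a i != 0) -> (#|FZ g grp a| <= b)%N.
  move=> a anz; case: (lower2 grp freeg anz) => h1 h2 h3.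
  case: Hcase => [[rm [ht hsz]]|[j [[j0 jr mj kj ht] [i0 [h0 hr]]]]].
    rewrite leq_divRL //; move: h3; rewrite (sum_const_r _ hsz).
    move=> h; apply: leq_trans h _; lia.
  have hs := sum_case2 freeg (FZ g grp a) hr h0 (ltnW jr).
  have ek := divn_eq k r; rewrite kj in ek.
  set a' := (k %/ r)%N in ek.
  have eb : b = a'.
    rewrite /b (_ : k.-1 = a' * r + j.-1)%N; last by lia.
    by rewrite divnMDl // divn_small ?addn0 //; lia.
  rewrite eb -ltnS -(ltn_pmul2r r0) mulSn.
  apply: (leq_ltn_trans hs).
  have hz : (\sum_(i in FZ g grp a) #|[set s | grp s == i]| < k)%N by apply: (leq_ltn_trans h3); lia.
  have hz2 : (\sum_(i in FZ g grp a) #|[set s | grp s == i]| < a' * r + j)%N by rewrite -ek.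
  clear hz; move: hz2; clearbody a'.
  clear ek eb hs h3 h1 h2; move: jr; clear; move: (\sum_(i in FZ g grp a) _)%N => S. lia.
have LB : forall a : 'I_k -> L, (exists i, a i != 0) ->
    (n - k + 2 - b.+1 <= hwt (enc g grp a))%N.
  move=> a anz; case: (lower2 grp freeg anz) => h1 h2 h3.
  have := fb a anz; rewrite (hwt_enc grp freeg).
  have : (#|Zu g a| <= m)%N by rewrite -[m in (_ <= m)%N]card_ord max_card.
  have : (#|Zp g grp a| <= t)%N by rewrite -[t in (_ <= t)%N]card_ord max_card.
  rewrite /n; lia.
have nz (a : 'I_k -> L) : enc g grp a != 0 -> exists i, a i != 0.
  move=> e; case: (pickP (fun i => a i != 0)) => [i hi|h]; first by exists i.
  by move: e; rewrite enc0 ?eqxx // => i; apply/eqP; exact: negbFE (h i).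
split; last first.
  move=> c /codeP [a ->] cnz; exact: LB (nz a cnz).
have [B [Bb Br bk]] : exists B : {set 'I_t},
    [/\ (b <= #|B|)%N, (forall i, i \in B -> #|[set s | grp s == i]| = r)
      & (b * r <= k.-1)%N].
  case: Hcase => [[rm [ht hsz]]|[j [[j0 jr mj kj ht] [i0 [h0 hr]]]]].
    exists setT; split => //; last exact: leq_divM.
    by rewrite cardsT card_ord ht /b leq_div2r //; lia.
  have ek := divn_eq k r; rewrite kj in ek.
  set a' := (k %/ r)%N in ek.
  have eb : b = a'.
    rewrite /b (_ : k.-1 = a' * r + j.-1)%N; last by lia.
    by rewrite divnMDl // divn_small ?addn0 //; lia.
  exists [set~ i0]; split.
  - by rewrite cardsC1 card_ord ht eb /a' leq_div2r.
  - by move=> i; rewrite in_setC1; apply: hr.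
  - rewrite eb; lia.
have [FZ0 [_ FZ0B FZ0c]] := subset_card (sub0set B) (n:=b) (ltac:(rewrite cards0; exact/andP)).
pose U0 := [set s | grp s \in FZ0].
have U0c : #|U0| = (b * r)%N.
  rewrite card_pre -FZ0c -sum_nat_const; apply: eq_bigr => i iF.
  by apply: Br; apply: (subsetP FZ0B).
have [T [U0T _ Tc]] := subset_card (subsetT U0) (n := k.-1)
  (ltac:(rewrite U0c cardsT card_ord; apply/andP; split => //; lia)).
have [a [anz hz]] := vanish freeg (ltac:(rewrite Tc; lia) : (#|T| < k)%N).
exists (enc g grp a); first by apply/codeP; exists a.
apply/andP; split.
  apply/eqP => /(enc_inj0 freeg km) h; case: anz => i; by rewrite h eqxx.
apply/eqP/anti_leq; rewrite LB // andbT (hwt_enc grp freeg).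
have : (k.-1 <= #|Zu g a|)%N.
  rewrite -Tc; apply: subset_leq_card; apply/subsetP => s sT.
  by rewrite inE hz.
have : (b <= #|Zp g grp a|)%N.
  rewrite -FZ0c; apply: subset_leq_card; apply/subsetP => i iF.
  rewrite inE linp_w big1 // => s hs; apply: hz; apply: (subsetP U0T).
  by rewrite inE (eqP hs).
have : (b <= t)%N by apply: leq_trans Bb _; rewrite -[t in (_ <= t)%N]card_ord max_card.
rewrite /n; lia.
Qed.

Print Assumptions theorem2.
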